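(* Let $R$ be a commutative ring. (1) Every $w$-split $R$-module is $w$-projective. (2) Let $0\to A\to B\to C\to 0$ be an exact sequence of $R$-modules with $C$ $w$-split. Then $A$ is $w$-split if and only if $B$ is $w$-split.
   Context: $R$ is a commutative ring with identity. For an $R$-module $M$ and $s\in R$, $\eta^M_s:M\to M$ is multiplication by $s$. GV-ideals and torsion: - An ideal $J$ of $R$ is a GV-ideal if $J$ is finitely generated and the natural map $R\to\mathrm{Hom}_R(J,R)$ is an isomorphism. $\mathrm{GV}(R)$ is the set of GV-ideals. - $\mathrm{tor_{GV}}(M)=\{x\in M: Jx=0\text{ for some }J\in\mathrm{GV}(R)\}$. - $M$ is GV-torsion if $\mathrm{tor_{GV}}(M)=M$, and GV-torsionfree if $\mathrm{tor_{GV}}(M)=0$. $w$-modules and $w$-projectivity: - A GV-torsionfree $M$ is a $w$-module if $\mathrm{Ext}^1_R(R/J,M)=0$ for all $J\in\mathrm{GV}(R)$. - For GV-torsionfree $M$, $M_w=\{x\in E(M): Jx\subseteq M\text{ for some }J\in\mathrm{GV}(R)\}$, where $E(M)$ is the injective envelope. - $M$ is $w$-projective if $\mathrm{Ext}^1_R(L(M),N)$ is GV-torsion for every torsionfree $w$-module $N$, where $L(M)=(M/\mathrm{tor_{GV}}(M))_w$. $w$-split: - A short exact sequence $0\to A\xrightarrow{f}B\xrightarrow{g}C\to 0$ is $w$-split if there exist $J=\langle d_1,\dots,d_n\rangle\in\mathrm{GV}(R)$ and $h_1,\dots,h_n\in\mathrm{Hom}_R(C,B)$ with $gh_k=\eta^C_{d_k}$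 for all $k$. - $M$ is $w$-split if there is a $w$-split exact sequence $0\to K\to P\to M\to 0$ with $P$ projective. *)

(* Defs.v *)
(* R-modules are MathComp left modules [lmodType R] over a
   commutative ring [R : comPzRingType] (ring with identity, possibly 0 = 1);
   R-linear maps are [{linear U -> V}]. *)
From HB Require Import structures.
From mathcomp Require Import all_boot all_order all_algebra.
Set Implicit Arguments. Unset Strict Implicit. Unset Printing Implicit Defensive.
Import GRing.Theory.
Local Open Scope ring_scope.

Section WTheory.
Variable R : comPzRingType.

Definition in_ideal (d : seq R) (x : R) : Prop :=
  exists c : 'I_(size d) -> R, x = \sum_(i < size d) c i * d`_i.

(* J = <d> is a GV-ideal: the natural map R -> Hom_R(J,R), r |-> (x |-> r x),
   is injective and surjective. *)
Definition is_GV (d : seq R) : Prop :=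
  (forall r : R, (forall x, in_ideal d x -> r * x = 0) -> r = 0) /\
  (forall phi : R -> R,
     (forall a x y, in_ideal d x -> in_ideal d y ->
        phi (a * x + y) = a * phi x + phi y) ->
     exists r : R, forall x, in_ideal d x -> phi x = r * x).

Definition in_tor_GV (M : lmodType R) (x : M) : Prop :=
  exists d : seq R, is_GV d /\ forall j, in_ideal d j -> j *: x = 0.

Definition GV_torsion (M : lmodType R) : Prop := forall x : M, in_tor_GV x.
Definition GV_torsionfree (M : lmodType R) : Prop :=
  forall x : M, in_tor_GV x -> x = 0.

Definition short_exact (A B C : lmodType R)
    (f : {linear A -> B}) (g : {linear B -> C}) : Prop :=
  injective f /\ (forall c, exists b, g b = c) /\
  (forall b, g b = 0 <-> exists a, b = f a).

Definition projective_mod (P : lmodType R) : Prop :=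
  forall (X Y : lmodType R) (p : {linear X -> Y}) (u : {linear P -> Y}),
    (forall y, exists x, p x = y) ->
    exists h : {linear P -> X}, forall z, p (h z) = u z.

Definition injective_mod (E : lmodType R) : Prop :=
  forall (X Y : lmodType R) (i : {linear X -> Y}) (u : {linear X -> E}),
    injective i ->
    exists h : {linear Y -> E}, forall z, h (i z) = u z.

Definition submod_pred (E : lmodType R) (S : E -> Prop) : Prop :=
  S 0 /\ (forall x y, S x -> S y -> S (x + y)) /\
  (forall (a : R) x, S x -> S (a *: x)).

(* e : Q -> E is an injective envelope of Q: E injective, e a monomorphism,
   and e(Q) is essential in E. *)
Definition inj_envelope (Q E : lmodType R) (e : {linear Q -> E}) : Prop :=
  injective_mod E /\ injective e /\
  forall S : E -> Prop, submod_pred S -> (exists x, S x /\ x <> 0) ->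
    exists x, S x /\ x <> 0 /\ exists q, x = e q.

(* Ext^1_R(L,N) is computed from a projective presentation
   0 -> K -i-> P -p-> L -> 0 (P projective) as
   Hom_R(K,N) / image(Hom_R(P,N) -> Hom_R(K,N)); the class of phi is 0 iff
   phi extends along i, and s.[phi] = [s phi].  This is independent of the
   presentation, so we quantify over all of them. *)
Definition proj_pres (L K P : lmodType R)
    (i : {linear K -> P}) (p : {linear P -> L}) : Prop :=
  short_exact i p /\ projective_mod P.

Definition Ext1_zero (L N : lmodType R) : Prop :=
  forall (K P : lmodType R) (i : {linear K -> P}) (p : {linear P -> L}),
    proj_pres i p ->
    forall phi : {linear K -> N},
      exists psi : {linear P -> N}, forall k, psi (i k) = phi k.

Definition Ext1_GV_torsion (L N : lmodType R) : Prop :=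
  forall (K P : lmodType R) (i : {linear K -> P}) (p : {linear P -> L}),
    proj_pres i p ->
    forall phi : {linear K -> N},
      exists d : seq R, is_GV d /\
        forall j, in_ideal d j ->
          exists psi : {linear P -> N}, forall k, psi (i k) = j *: phi k.

Definition is_quot_by_ideal (d : seq R) (Q : lmodType R)
    (q : {linear R^o -> Q}) : Prop :=
  (forall y, exists r, q r = y) /\ (forall r, q r = 0 <-> in_ideal d r).

Definition w_module (N : lmodType R) : Prop :=
  GV_torsionfree N /\
  forall d : seq R, is_GV d ->
    forall (Q : lmodType R) (q : {linear R^o -> Q}),
      is_quot_by_ideal d q -> Ext1_zero Q N.

(* A realization of L(M): q : M -> Q surjective with kernel tor_GV(M)
   (so Q = M/tor_GV(M)), e : Q -> E an injective envelope, and
   l : L -> E injective with image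
   (Q)_w = { x in E | J x \subseteq e(Q) for some GV-ideal J }. *)
Definition is_LM (M Q E L : lmodType R) (q : {linear M -> Q})
    (e : {linear Q -> E}) (l : {linear L -> E}) : Prop :=
  (forall y, exists x, q x = y) /\ (forall x, q x = 0 <-> in_tor_GV x) /\
  inj_envelope e /\ injective l /\
  (forall x : E, (exists z, x = l z) <->
     exists d : seq R, is_GV d /\
       forall j, in_ideal d j -> exists y, j *: x = e y).

Definition w_projective (M : lmodType R) : Prop :=
  forall (Q E L : lmodType R) (q : {linear M -> Q})
         (e : {linear Q -> E}) (l : {linear L -> E}),
    is_LM q e l ->
    forall N : lmodType R, GV_torsionfree N -> w_module N ->
      Ext1_GV_torsion L N.

Definition w_split_seq (A B C : lmodType R)
    (f : {linear A -> B}) (g : {linear B -> C}) : Prop :=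
  exists d : seq R, is_GV d /\
    exists h : 'I_(size d) -> {linear C -> B},
      forall k c, g (h k c) = d`_k *: c.

Definition w_split (M : lmodType R) : Prop :=
  exists (K P : lmodType R) (f : {linear K -> P}) (g : {linear P -> M}),
    short_exact f g /\ projective_mod P /\ w_split_seq f g.

End WTheory.

(* Main.v *)
Require Import Defs.
From HB Require Import structures.
From mathcomp Require Import all_boot all_order all_algebra.
From mathcomp Require Import finmap.
From mathcomp.multinomials Require Import monalg.
From mathcomp Require Import boolp.
Set Implicit Arguments. Unset Strict Implicit. Unset Printing Implicit Defensive.
Import GRing.Theory.
Local Open Scope ring_scope.
From mathcomp Require Import ring.
Section Util.
Variable R : comPzRingType.

Definition mklin (U V : lmodType R) (f : U -> V) (H : linear f) : {linear U -> V} :=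
  HB.pack f (GRing.isLinear.Build R U V *:%R f H).
Lemma mklinE U V f H x : @mklin U V f H x = f x. Proof. by []. Qed.

Lemma lin_factor (U X B : lmodType R) (f : {linear U -> B}) (F : {linear X -> B}) :
  injective f -> (forall x, exists a, F x = f a) ->
  exists G : {linear X -> U}, forall x, f (G x) = F x.
Proof.
move=> fi H; have [G HG] := choice H.
have lin : linear G.
  by move=> a x y; apply: fi; rewrite linearP -!HG linearP.
by exists (mklin lin) => x; rewrite mklinE HG.
Qed.

Lemma lin_descend (B C X : lmodType R) (g : {linear B -> C}) (F : {linear B -> X}) :
  (forall c, exists b, g b = c) -> (forall b, g b = 0 -> F b = 0) ->
  exists G : {linear C -> X}, forall b, G (g b) = F b.
Proof.
move=> gs H; have [s Hs] := choice gs.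
have key : forall b b', g b = g b' -> F b = F b'.
  move=> b b' e; apply/eqP; rewrite -subr_eq0 -linearB; apply/eqP/H.
  by rewrite linearB e subrr.
have lin : linear (F \o s).
  move=> a x y /=; rewrite -linearP; apply: key.
  by rewrite !linearP !Hs.
exists (mklin lin) => b; rewrite mklinE /=; apply: key; exact: Hs.
Qed.

Lemma in_ideal0 (d : seq R) : in_ideal d 0.
Proof. by exists (fun _ => 0); rewrite big1 // => i _; rewrite mul0r. Qed.
Lemma in_idealD (d : seq R) x y : in_ideal d x -> in_ideal d y -> in_ideal d (x + y).
Proof.
move=> [c1 ->] [c2 ->]; exists (fun i => c1 i + c2 i).
by rewrite -big_split; apply: eq_bigr => i _; rewrite mulrDl.
Qed.
Lemma in_idealM (d : seq R) r x : in_ideal d x -> in_ideal d (r * x).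
Proof.
move=> [c ->]; exists (fun i => r * c i).
by rewrite mulr_sumr; apply: eq_bigr => i _; rewrite mulrA.
Qed.
Lemma in_idealMr (d : seq R) r x : in_ideal d x -> in_ideal d (x * r).
Proof. by rewrite mulrC; apply: in_idealM. Qed.
Lemma in_idealN (d : seq R) x : in_ideal d x -> in_ideal d (- x).
Proof. by move=> h; rewrite -mulN1r; apply: in_idealM. Qed.
Lemma in_ideal_nth (d : seq R) (i : 'I_(size d)) : in_ideal d d`_i.
Proof.
exists (fun k => (k == i)%:R); rewrite (bigD1 i) //= eqxx mul1r big1 ?addr0 //.
by move=> k /negbTE ->; rewrite mul0r.
Qed.
Lemma in_ideal_mem (d : seq R) x : x \in d -> in_ideal d x.
Proof.
move=> xd; have := in_ideal_nth (Ordinal (etrans (index_mem x d) xd)).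
by rewrite /= nth_index.
Qed.

Lemma in_ideal_sum (d : seq R) (I : Type) (r : seq I) (F : I -> R) :
  (forall i, in_ideal d (F i)) -> in_ideal d (\sum_(i <- r) F i).
Proof.
move=> H; elim: r => [|a r IH]; first by rewrite big_nil; apply: in_ideal0.
by rewrite big_cons; apply: in_idealD.
Qed.

Definition ilin (d : seq R) (phi : R -> R) :=
  forall a x y, in_ideal d x -> in_ideal d y -> phi (a * x + y) = a * phi x + phi y.

Lemma ilin0 d phi : ilin d phi -> phi 0 = 0.
Proof.
move=> H; have := H 1 0 0 (in_ideal0 d) (in_ideal0 d); rewrite !mul1r !addr0 => h.
by apply: (@addrI _ (phi 0)); rewrite addr0 -h.
Qed.

Lemma ilin_sum d phi (I : Type) (r : seq I) (c F : I -> R) : ilin d phi ->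
  (forall i, in_ideal d (F i)) ->
  phi (\sum_(i <- r) c i * F i) = \sum_(i <- r) c i * phi (F i).
Proof.
move=> H HF; elim: r => [|a r IH]; first by rewrite !big_nil (ilin0 H).
rewrite !big_cons H ?IH //; apply: in_ideal_sum => i; exact: in_idealM.
Qed.

Lemma kill_gen (M : lmodType R) (d : seq R) (x : M) :
  (forall i : 'I_(size d), d`_i *: x = 0) -> forall j, in_ideal d j -> j *: x = 0.
Proof.
move=> H j [c ->]; rewrite scaler_suml big1 // => i _.
by rewrite -scalerA H scaler0.
Qed.

Lemma GV1 : is_GV [:: (1 : R)].
Proof.
split.
  by move=> r H; have := H 1 (in_ideal_mem (mem_head _ _)); rewrite mulr1.
move=> phi H; exists (phi 1) => x [c ->].
rewrite big_ord1 /= mulr1.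
have := H (c ord0) 1 0 (in_ideal_mem (mem_head _ _)) (in_ideal0 _).
rewrite !addr0 mulr1 => ->.
have -> : phi 0 = 0.
  have := H 1 0 0 (in_ideal0 _) (in_ideal0 _); rewrite !mul1r !addr0 => h.
  by apply: (@addrI _ (phi 0)); rewrite addr0 -h.
by rewrite addr0 mulrC.
Qed.

Section Prod.
Variables d1 d2 : seq R.
Let d := [seq a * b | a <- d1, b <- d2].

Lemma prod_mem a b : in_ideal d1 a -> in_ideal d2 b -> in_ideal d (a * b).
Proof.
move=> [c1 ->] [c2 ->]; rewrite mulr_suml; apply: in_ideal_sum => i.
rewrite mulr_sumr; apply: in_ideal_sum => j; rewrite mulrACA.
apply: in_idealM; apply: in_ideal_mem; apply/allpairsP.
by exists (d1`_i, d2`_j); split => //=; apply: mem_nth.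
Qed.

Lemma prod_gen (k : 'I_(size d)) :
  exists a b, [/\ in_ideal d1 a, in_ideal d2 b & d`_k = a * b].
Proof.
have /allpairsP [[a b] /= [ha hb ->]] := mem_nth 0 (ltn_ord k).
by exists a, b; split => //; apply: in_ideal_mem.
Qed.

Lemma GV_prod : is_GV d1 -> is_GV d2 -> is_GV d.
Proof.
move=> [G11 G12] [G21 G22]; split.
  move=> r H; apply: G21 => b hb; apply: G11 => a ha.
  by rewrite -mulrA [b * a]mulrC; apply: H; apply: prod_mem.
move=> phi H.
have ex : forall b, exists r, in_ideal d2 b -> forall x, in_ideal d1 x -> phi (x * b) = r * x.
  move=> b; case: (pselect (in_ideal d2 b)) => hb; last by exists 0.
  have [r Hr] := G12 (fun x => phi (x * b)) (fun a x y hx hy =>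
    (etrans (congr1 phi (etrans (mulrDl _ _ _) (congr1 (fun z => z + _) (esym (mulrA _ _ _)))))
      (H a _ _ (prod_mem hx hb) (prod_mem hy hb)))).
  by exists r => _.
have [chi Hchi] := choice ex.
have [r Hr] : exists r, forall b, in_ideal d2 b -> chi b = r * b.
  apply: G22 => a b b' hb hb'; apply/eqP; rewrite -subr_eq0; apply/eqP.
  apply: G11 => x hx.
  rewrite mulrBl mulrDl -mulrA -!Hchi //; last first.
    by apply: in_idealD => //; apply: in_idealM.
  by rewrite mulrDr mulrCA -H ?subrr //; apply: prod_mem.
exists r => y [c ->]; rewrite (ilin_sum _ _ H); last first.
  by move=> i; apply: in_ideal_nth.
rewrite mulr_sumr; apply: eq_bigr => k _.
have [a [b [ha hb ->]]] := prod_gen k.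
by rewrite Hchi // Hr // -mulrA [b * a]mulrC mulrCA.
Qed.
End Prod.
End Util.

Section SubMod.
Variables (R : comPzRingType) (M : lmodType R) (S : M -> Prop).
Hypothesis HS : submod_pred S.
Definition Sb : pred M := fun x => `[< S x >].
Lemma Sb_closed : subsemimod_closed Sb.
Proof.
case: HS => S0 [SD SZ]; split; first split.
- by apply/asboolP.
- by move=> x y /asboolP ? /asboolP ?; apply/asboolP; apply: SD.
- by move=> a x /asboolP ?; apply/asboolP; apply: SZ.
Qed.
HB.instance Definition _ := GRing.isSubmodClosed.Build R M Sb Sb_closed.
Inductive subT := mkSub (x : M) of Sb x.
Definition sval' (u : subT) := let: mkSub x _ := u in x.
HB.instance Definition _ := [isSub for sval'].
HB.instance Definition _ := [Choice of subT by <:].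
HB.instance Definition _ := [SubChoice_isSubLmodule of subT by <:].
Lemma sval'_lin : linear sval'.
Proof. by move=> a x y. Qed.
Lemma sub_exists : exists (K : lmodType R) (i : {linear K -> M}),
  injective i /\ forall x, S x <-> exists k, x = i k.
Proof.
exists subT, (mklin sval'_lin); split; first exact: val_inj.
move=> x; split.
  by move=> h; exists (mkSub (introT (asboolP _) h)).
by move=> [[y hy] ->]; apply/asboolP.
Qed.
End SubMod.
Section Quot.
Variables (R : comPzRingType) (M : lmodType R) (S : M -> Prop).
Hypothesis HS : submod_pred S.
Let S0 : S 0. Proof. by case: HS. Qed.
Let SD x y : S x -> S y -> S (x + y). Proof. by case: HS => _ [h _]; apply: h. Qed.
Let SZ a x : S x -> S (a *: x). Proof. by case: HS => _ [_ h]; apply: h. Qed.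
Let SN x : S x -> S (- x). Proof. by move=> h; rewrite -scaleN1r; apply: SZ. Qed.
Let SB x y : S x -> S y -> S (x - y). Proof. by move=> ??; apply: SD => //; apply: SN. Qed.
Let SC x y : S (x - y) -> S (y - x). Proof. by move=> h; rewrite -opprB; apply: SN. Qed.

Let qrel x : pred M := fun y => `[< S (x - y) >].
Let qex x : exists y, qrel x y. Proof. by exists x; apply/asboolP; rewrite subrr. Qed.
Definition canon x := xchoose (qex x).
Lemma canon_rel x : S (x - canon x).
Proof. exact/asboolP/(xchooseP (qex x)). Qed.
Lemma canon_eq x y : S (x - y) -> canon x = canon y.
Proof.
move=> h; apply: eq_xchoose => z; apply/asboolP/asboolP => hz.
- have -> : y - z = (x - z) - (x - y) by rewrite [in RHS]opprB [in RHS]addrC [in RHS]addrA subrK.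
  by apply: SB.
- have -> : x - z = (x - y) + (y - z) by rewrite [in RHS]addrA subrK.
  by apply: SD.
Qed.
Lemma canonK x : canon (canon x) = canon x.
Proof. by apply: canon_eq; apply: SC; apply: canon_rel. Qed.

Inductive quotT := mkQ (x : M) of canon x == x.
Definition qval (u : quotT) := let: mkQ x _ := u in x.
HB.instance Definition _ := [isSub for qval].
HB.instance Definition _ := [Choice of quotT by <:].

Definition qpi (x : M) : quotT := @mkQ (canon x) (introT eqP (canonK x)).
Lemma qpiP x y : qpi x = qpi y <-> S (x - y).
Proof.
split.
- move=> /(congr1 qval) /= e.
  have -> : x - y = (x - canon x) - (y - canon y) by rewrite e [in RHS]opprB [in RHS]addrA subrK.
  by apply: SB; apply: canon_rel.
- by move=> h; apply: val_inj => /=; apply: canon_eq.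
Qed.
Lemma qpi_val u : qpi (qval u) = u.
Proof. by apply: val_inj; case: u => x /= /eqP. Qed.
Lemma qpi_surj u : exists x, qpi x = u.
Proof. by exists (qval u); apply: qpi_val. Qed.

Definition qzero := qpi 0.
Definition qadd u v := qpi (qval u + qval v).
Definition qopp u := qpi (- qval u).
Definition qscale a u := qpi (a *: qval u).
Lemma qvalE x : S (qval (qpi x) - x). Proof. by apply: SC; apply: canon_rel. Qed.
Lemma qaddE x y : qadd (qpi x) (qpi y) = qpi (x + y).
Proof.
apply/qpiP; have -> : qval (qpi x) + qval (qpi y) - (x + y) =
  (qval (qpi x) - x) + (qval (qpi y) - y) by rewrite opprD addrACA.
by apply: SD; apply: qvalE.
Qed.
Lemma qoppE x : qopp (qpi x) = qpi (- x).
Proof. by apply/qpiP; rewrite -opprD; apply: SN; apply: qvalE. Qed.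
Lemma qscaleE a x : qscale a (qpi x) = qpi (a *: x).
Proof. by apply/qpiP; rewrite -scalerBr; apply: SZ; apply: qvalE. Qed.

Lemma qaddA : associative qadd.
Proof.
move=> u v w; case: (qpi_surj u) (qpi_surj v) (qpi_surj w) => [x <-] [y <-] [z <-].
by rewrite !qaddE addrA.
Qed.
Lemma qaddC : commutative qadd.
Proof. by move=> u v; case: (qpi_surj u) (qpi_surj v) => [x <-] [y <-]; rewrite !qaddE addrC. Qed.
Lemma qadd0 : left_id qzero qadd.
Proof. by move=> u; case: (qpi_surj u) => [x <-]; rewrite /qzero qaddE add0r. Qed.
Lemma qaddN : left_inverse qzero qopp qadd.
Proof. by move=> u; case: (qpi_surj u) => [x <-]; rewrite qoppE qaddE addNr. Qed.
HB.instance Definition _ := GRing.isZmodule.Build quotT qaddA qaddC qadd0 qaddN.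
Lemma qscaleA a b u : qscale a (qscale b u) = qscale (a * b) u.
Proof. by case: (qpi_surj u) => [x <-]; rewrite !qscaleE scalerA. Qed.
Lemma qscale1 : left_id 1 qscale.
Proof. by move=> u; case: (qpi_surj u) => [x <-]; rewrite !qscaleE scale1r. Qed.
Let qplus (u v : quotT) : u + v = qadd u v. Proof. by []. Qed.
Lemma qscaleDr : right_distributive qscale +%R.
Proof.
move=> a u v; case: (qpi_surj u) (qpi_surj v) => [x <-] [y <-].
by rewrite !qplus (qaddE x y) !qscaleE qaddE scalerDr.
Qed.
Lemma qscaleDl v : {morph qscale^~ v: a b / a + b}.
Proof.
move=> a b; case: (qpi_surj v) => [x <-].
by rewrite !qplus !qscaleE (qaddE (a *: x)) scalerDl.
Qed.
HB.instance Definition _ := GRing.Zmodule_isLmodule.Build R quotT qscaleA qscale1 qscaleDr qscaleDl.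

Lemma qpi_lin : linear qpi.
Proof.
move=> a x y.
have -> : a *: qpi x + qpi y = qadd (qscale a (qpi x)) (qpi y) by [].
by rewrite qscaleE qaddE.
Qed.
Lemma qpi0 x : qpi x = 0 <-> S x.
Proof.
have -> : (0 : quotT) = qpi 0 by [].
by rewrite qpiP subr0.
Qed.
End Quot.
Lemma quot_exists (R : comPzRingType) (M : lmodType R) (S : M -> Prop) :
  submod_pred S -> exists (Q : lmodType R) (pi : {linear M -> Q}),
  (forall y, exists x, pi x = y) /\ forall x, pi x = 0 <-> S x.
Proof.
move=> HS; exists (quotT HS), (mklin (qpi_lin HS)); split.
  exact: qpi_surj.
exact: qpi0.
Qed.
Section Free.
Variables (R : comPzRingType) (A : choiceType).
Definition FA := malg A R.
HB.instance Definition _ := GRing.Zmodule.on FA.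
Implicit Types (g : FA).
Definition fscale (c : R) (g : FA) : FA := \sum_(k <- msupp g) << c * g@_k *g k >>.
Lemma fscaleE c g k : (fscale c g)@_k = c * g@_k.
Proof.
rewrite {2}[g]monalgE !raddf_sum mulr_sumr.
by apply/eq_bigr=> /= i _; rewrite !mcoeffU mulrnAr.
Qed.
Lemma fscaleA c1 c2 g : fscale c1 (fscale c2 g) = fscale (c1 * c2) g.
Proof. by apply/malgP=> x; rewrite !fscaleE mulrA. Qed.
Lemma fscale1r : left_id 1 fscale.
Proof. by move=> D; apply/malgP=> k; rewrite !fscaleE mul1r. Qed.
Lemma fscaleDr : right_distributive fscale +%R.
Proof. by move=> c g1 g2; apply/malgP=> k; rewrite !(mcoeffD, fscaleE) mulrDr. Qed.
Lemma fscaleDl g : {morph fscale^~ g : c1 c2 / c1 + c2}.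
Proof. by move=> c1 c2; apply/malgP=> x; rewrite !(mcoeffD, fscaleE) mulrDl. Qed.
HB.instance Definition _ := GRing.Zmodule_isLmodule.Build R FA fscaleA fscale1r fscaleDr fscaleDl.

Lemma mcoeffZ c (g : FA) k : (c *: g)@_k = c * g@_k.
Proof. exact: fscaleE. Qed.

Variable V : lmodType R.
Variable x : A -> V.
Definition flift (g : FA) : V := \sum_(k <- msupp g) g@_k *: x k.
Lemma fliftw g (D : {fset A}) : (msupp g `<=` D)%fset -> flift g = \sum_(k <- D) g@_k *: x k.
Proof.
move=> sub; rewrite /flift (big_fset_incl _ sub) // => k _ kn.
by rewrite mcoeff_outdom // scale0r.
Qed.
Lemma flift_lin : linear flift.
Proof.
move=> c g1 g2.
set D := (msupp g1 `|` msupp g2 `|` msupp (c *: g1 + g2))%fset.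
rewrite (@fliftw (c *: g1 + g2) D); last by rewrite fsubsetUr.
rewrite (@fliftw g1 D); last by rewrite /D -fsetUA fsubsetUl.
rewrite (@fliftw g2 D); last by rewrite /D fsubsetU // fsubsetUr.
rewrite scaler_sumr -big_split /=; apply: eq_bigr => k _.
by rewrite mcoeffD mcoeffZ scalerDl scalerA.
Qed.
Lemma fliftU c k : flift << c *g k >> = c *: x k.
Proof.
rewrite (@fliftw _ [fset k]%fset); first by rewrite big_seq_fset1 mcoeffUU.
apply/fsubsetP => k'; rewrite -mcoeff_neq0 mcoeffU in_fset1.
by case: (k =P k') => [->|_]; rewrite ?eqxx // mulr0n eqxx.
Qed.
End Free.

Lemma free_exists (R : comPzRingType) (A : lmodType R) : exists (F : lmodType R) (g : {linear F -> A}),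
  projective_mod F /\ forall a, exists x, g x = a.
Proof.
exists (FA R A), (mklin (flift_lin (fun a : A => a))); split; last first.
  by move=> a; exists << 1 *g a >>; rewrite mklinE fliftU scale1r.
move=> X Y p u ps.
have [x Hx] := choice (fun a : A => ps (u << 1 *g a >>)).
exists (mklin (flift_lin x)) => g; rewrite mklinE /flift linear_sum /=.
rewrite {3}[g]monalgE linear_sum; apply: eq_bigr => k _.
rewrite linearZ Hx -linearZ; congr (u _); apply/malgP => k'.
by rewrite mcoeffZ !mcoeffU mulr_natr.
Qed.

Section Basics.
Variable R : comPzRingType.

Section Pairs. Variables P1 P2 : lmodType R.
Lemma pairP (a : R) (x y : P1) (x' y' : P2) : a *: (x, x') + (y, y') = (a *: x + y, a *: x' + y').
Proof. by []. Qed.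
Lemma pair0 : (0 : (P1 * P2)%type) = (0, 0). Proof. by []. Qed.
Lemma pairD (x y : P1) (x' y' : P2) : (x, x') + (y, y') = (x + y, x' + y'). Proof. by []. Qed.
Lemma pairZ (a : R) (x : P1) (x' : P2) : a *: (x, x') = (a *: x, a *: x'). Proof. by []. Qed.
Lemma pairN (x : P1) (x' : P2) : - (x, x') = (- x, - x'). Proof. by []. Qed.
End Pairs.

Lemma proj_Ro : projective_mod (R^o : lmodType R).
Proof.
move=> X Y p u ps; have [x1 hx1] := ps (u 1).
have lin : linear (fun r : R^o => r *: x1).
  by move=> a r s; rewrite scalerDl scalerA.
exists (mklin lin) => r; rewrite mklinE linearZ hx1 -linearZ.
by congr (u _); rewrite /GRing.scale /= mulr1.
Qed.

Lemma proj_prod (P1 P2 : lmodType R) : projective_mod P1 -> projective_mod P2 ->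
  projective_mod (P1 * P2)%type.
Proof.
move=> H1 H2 X Y p u ps.
have l1 : linear (fun x : P1 => u (x, 0)).
  by move=> a x y; rewrite -linearP pairP scaler0 addr0.
have l2 : linear (fun x : P2 => u (0, x)).
  by move=> a x y; rewrite -linearP pairP scaler0 addr0.
have [h1 e1] := H1 X Y p (mklin l1) ps.
have [h2 e2] := H2 X Y p (mklin l2) ps.
have lin : linear (fun v : P1 * P2 => h1 v.1 + h2 v.2).
  by move=> a [x1 x2] [y1 y2] /=; rewrite !linearP scalerDr addrACA.
exists (mklin lin) => [[x y]]; rewrite mklinE /= linearD e1 e2 !mklinE -linearD.
by rewrite pairD addr0 add0r.
Qed.

Lemma pushout_exists (N K P L : lmodType R) (i : {linear K -> P}) (p : {linear P -> L})
  (phi : {linear K -> N}) : short_exact i p ->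
  exists (X : lmodType R) (iota : {linear N -> X}) (nu : {linear P -> X})
    (rho : {linear X -> L}),
  [/\ injective iota, forall n, rho (iota n) = 0, forall x, rho (nu x) = p x,
     forall k, nu (i k) = iota (phi k) & forall xi, rho xi = 0 -> exists n, xi = iota n].
Proof.
move=> [iinj [psurj pker]].
pose S := fun v : (N * P)%type => exists k, v = (phi k, - i k).
have HS : submod_pred S.
  split; first by exists 0; rewrite pair0 (linear0 phi) (linear0 i) oppr0.
  split.
    move=> _ _ [k1 ->] [k2 ->]; exists (k1 + k2).
    by rewrite pairD (linearD phi) (linearD i) opprD.
  by move=> a _ [k ->]; exists (a *: k); rewrite pairZ (linearZ_LR phi) (linearZ_LR i) scalerN.
have [X [pi [pis pi0]]] := quot_exists HS.
have l1 : linear (fun n : N => pi (n, 0)).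
  by move=> a x y; rewrite -linearP pairP scaler0 addr0.
have l2 : linear (fun x : P => pi (0, x)).
  by move=> a x y; rewrite -linearP pairP scaler0 addr0.
have lr : linear (fun v : (N * P)%type => p v.2).
  by move=> a [] ? ? [] ? ? /=; rewrite linearP.
have pik k : p (i k) = 0 by apply/pker; exists k.
have [rho Hrho] : exists rho : {linear X -> L}, forall v, rho (pi v) = p v.2.
  have hF : forall v, pi v = 0 -> mklin lr v = 0.
    by move=> v /pi0 [k ->]; rewrite mklinE /= linearN pik oppr0.
  have [G HG] := lin_descend pis hF.
  by exists G => v; rewrite HG.
exists X, (mklin l1), (mklin l2), rho; split.
- move=> n m /= /eqP; rewrite ?mklinE -subr_eq0 -linearB pairD subr0 => /eqP /pi0 [k []].
  move=> e /eqP; rewrite eq_sym oppr_eq0 -(linear0 i) => /eqP /iinj k0.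
  by apply/eqP; rewrite -subr_eq0 e k0 linear0.
- by move=> n; rewrite ?mklinE Hrho linear0.
- by move=> x; rewrite ?mklinE Hrho.
- move=> k; rewrite ?mklinE; apply/eqP; rewrite -subr_eq0 -linearB; apply/eqP/pi0.
  exists (- k); have -> : (0, i k) - (phi k, 0) = (0 - phi k, i k - 0) by [].
  by rewrite (linearN phi) (linearN i) opprK sub0r subr0.
- move=> xi; have [[n x] <-] := pis xi; rewrite Hrho /= => /pker [k ->].
  exists (n + phi k); rewrite ?mklinE.
  apply/eqP; rewrite -subr_eq0 -linearB; apply/eqP/pi0; exists (- k).
  have -> : (n, i k) - (n + phi k, 0) = (n - (n + phi k), i k - 0) by [].
  by rewrite (linearN phi) (linearN i) opprK opprD addrA subrr sub0r subr0.
Qed.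
End Basics.

Lemma extJ (R : comPzRingType) (N : lmodType R) (d : seq R) (theta : R -> N) :
  w_module N -> is_GV d ->
  (forall a x y, in_ideal d x -> in_ideal d y -> theta (a * x + y) = a *: theta x + theta y) ->
  exists n0, forall j, in_ideal d j -> theta j = j *: n0.
Proof.
move=> [_ wm] Hd Hth.
pose S := fun x : R^o => in_ideal d x.
have HS : submod_pred S.
  split; first exact: in_ideal0.
  split; first by move=> x y; apply: in_idealD.
  by move=> a x; apply: in_idealM.
have [Q [q [qs q0]]] := quot_exists HS.
have [K [i [iinj iS]]] := sub_exists HS.
have E := wm d Hd Q q (conj qs q0).
have lin : linear (fun k : K => theta (i k)).
  move=> a x y; rewrite linearP.
  apply: Hth; first by apply/iS; exists x.
  by apply/iS; exists y.
have pp : proj_pres i q.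
  split; last exact: (@proj_Ro R).
  split => //; split => // b; rewrite q0; exact: iS.
have [psi Hpsi] := E K _ i q pp (mklin lin).
exists (psi 1) => j /iS [k ->].
have -> : theta (i k) = psi (i k) by rewrite Hpsi.
rewrite -linearZ; congr (psi _).
by rewrite /GRing.scale /= mulr1.
Qed.

Lemma tor2 (R : comPzRingType) (N : lmodType R) (n : N) (d1 d2 : seq R) :
  GV_torsionfree N -> is_GV d1 -> is_GV d2 ->
  (forall j1 j2, in_ideal d1 j1 -> in_ideal d2 j2 -> (j1 * j2) *: n = 0) -> n = 0.
Proof.
move=> tf G1 G2 H; apply: (tf); exists d2; split => // j2 h2.
apply: (tf); exists d1; split => // j1 h1; rewrite scalerA; exact: H.
Qed.

Section Part1.
Variables (R : comPzRingType) (M P0 : lmodType R).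
Hypothesis P0proj : projective_mod P0.
Variables (g0 : {linear P0 -> M}) (c : R) (h : {linear M -> P0}).
Hypothesis Hh : forall m, g0 (h m) = c *: m.
Variables (Q E L : lmodType R) (q : {linear M -> Q}) (e : {linear Q -> E}) (l : {linear L -> E}).
Hypothesis Hlm : is_LM q e l.
Variables (N : lmodType R).
Hypotheses (tf : GV_torsionfree N) (wm : w_module N).
Variables (K P : lmodType R) (i : {linear K -> P}) (p : {linear P -> L}).
Hypothesis pp : proj_pres i p.
Variable phi : {linear K -> N}.

Lemma part1_gen : exists psi : {linear P -> N}, forall k, psi (i k) = c *: phi k.
Proof.
move: Hlm => [qs [q0 [[_ [einj _]] [linj Hl]]]].
have pse := pp.1; move: (pp) => [[iinj0 [psurj pker]] _].
have [ell Hell] : exists ell : {linear Q -> L}, forall y, l (ell y) = e y.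
  apply: lin_factor => // y; apply/Hl; exists [:: 1]; split; first exact: GV1.
  by move=> j _; exists (j *: y); rewrite linearZ_LR.
have ellinj : injective ell.
  by move=> y y' /(congr1 l); rewrite !Hell => /einj.
have [X [iota [nu [rho [iinj rho_iota rho_nu nu_i rho_ker]]]]] := pushout_exists phi pse.
have lin1 : linear (fun x : P0 => ell (q (g0 x))) by move=> a x y; rewrite !linearP.
have [alpha Ha] := @P0proj _ _ p (mklin lin1) psurj.
have lin2 : linear (fun m : M => nu (alpha (h m))) by move=> a x y; rewrite !linearP.
pose sM := mklin lin2.
have rho_sM m : rho (sM m) = c *: ell (q m).
  by rewrite mklinE rho_nu Ha mklinE Hh (linearZ_LR q) (linearZ_LR ell).
have [sQ HsQ] : exists sQ : {linear Q -> X}, forall m, sQ (q m) = sM m.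
  apply: lin_descend => // m qm0; have [d [Gd Hd]] := (q0 m).1 qm0.
  have [n en] : exists n, sM m = iota n.
    by apply: rho_ker; rewrite rho_sM qm0 linear0 scaler0.
  suff n0 : n = 0 by rewrite en n0 linear0.
  apply: (tf); exists d; split => // j hj; apply: iinj.
  by rewrite linearZ_LR -en -linearZ_LR Hd // linear0 linear0.
have rho_sQ y : rho (sQ y) = c *: ell y.
  by have [m <-] := qs y; rewrite HsQ rho_sM.
have [D HD] : exists D : L -> seq R, forall z, is_GV (D z) /\
    forall j, in_ideal (D z) j -> exists y, ell y = j *: z.
  suff /choice [D HD] : forall z, exists d, is_GV d /\
    forall j, in_ideal d j -> exists y, ell y = j *: z by exists D.
  move=> z; have [d [Gd Hd]] : exists d : seq R, is_GV d /\
      forall j, in_ideal d j -> exists y, j *: l z = e y by apply/Hl; exists z.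
  exists d; split => // j /Hd [y ey]; exists y; apply: linj.
  by rewrite Hell -ey linearZ_LR.
pose Good z xi := rho xi = c *: z /\
  forall j y, in_ideal (D z) j -> ell y = j *: z -> j *: xi = sQ y.
have good_ex z : exists xi, Good z xi.
  have [Gz HDz] := HD z.
  have [x0 ex0] := psurj (c *: z).
  have th_ex : forall j : R, exists n : N, in_ideal (D z) j ->
      forall y, ell y = j *: z -> iota n = sQ y - j *: nu x0.
    move=> j; case: (pselect (in_ideal (D z) j)) => hj; last by exists 0.
    have [y0 ey0] := HDz j hj.
    have [n en] : exists n, sQ y0 - j *: nu x0 = iota n.
      apply: rho_ker; rewrite linearB linearZ_LR rho_sQ rho_nu ex0 ey0 !scalerA mulrC.
      by rewrite subrr.
    by exists n => _ y ey; rewrite (ellinj _ _ (etrans ey (esym ey0))) en.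
  have [th Hth] := choice th_ex.
  have [n0 Hn0] : exists n0, forall j, in_ideal (D z) j -> th j = j *: n0.
    apply: extJ => // a x x' hx hx'.
    have [y ey] := HDz x hx; have [y' ey'] := HDz x' hx'.
    have hax : in_ideal (D z) (a * x + x') by apply: in_idealD => //; apply: in_idealM.
    apply: iinj; rewrite (Hth _ hax (a *: y + y')); last first.
      by rewrite linearP ey ey' scalerA scalerDl.
    rewrite linearP [in RHS]linearP (Hth _ hx y ey) (Hth _ hx' y' ey') scalerDl -scalerA.
    by rewrite scalerBr addrACA opprD.
  exists (nu x0 + iota n0); split.
    by rewrite linearD rho_nu rho_iota addr0.
  move=> j y hj ey; rewrite scalerDr -[j *: iota n0]linearZ_LR -(Hn0 j hj) (Hth _ hj y ey).
  by rewrite addrC subrK.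
have [sL HsL] := choice good_ex.
have sL_lin : linear sL.
  move=> a z z'; set w := a *: z + z'.
  have [n en] : exists n, a *: sL z + sL z' - sL w = iota n.
    apply: rho_ker; rewrite linearB linearP (HsL z).1 (HsL z').1 (HsL w).1.
    by rewrite /w scalerDr !scalerA mulrC subrr.
  suff n0 : n = 0 by apply/eqP; rewrite -subr_eq0 -opprB en n0 linear0 oppr0.
  have [Gw _] := HD w; have [Gz _] := HD z; have [Gz' _] := HD z'.
  apply: (tor2 tf Gw Gz) => j1 j2 h1 h2.
  apply: (tf); exists (D z'); split => // j3 h3.
  have [y1 ey1] := (HD w).2 j1 h1.
  have [y2 ey2] := (HD z).2 j2 h2.
  have [y3 ey3] := (HD z').2 j3 h3.
  apply: iinj; rewrite linear0 (linearZ_LR iota) (linearZ_LR iota) -en.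
  rewrite !scalerA !scalerBr !scalerDr !scalerA.
  have e2 : (j3 * (j1 * j2) * a) *: sL z = sQ ((a * j1 * j3) *: y2).
    rewrite (linearZ_LR sQ) -((HsL z).2 _ _ h2 ey2) scalerA; congr (_ *: _); ring.
  have e3 : (j3 * (j1 * j2)) *: sL z' = sQ ((j1 * j2) *: y3).
    rewrite (linearZ_LR sQ) -((HsL z').2 _ _ h3 ey3) scalerA; congr (_ *: _); ring.
  have e1 : (j3 * (j1 * j2)) *: sL w = sQ ((j2 * j3) *: y1).
    rewrite (linearZ_LR sQ) -((HsL w).2 _ _ h1 ey1) scalerA; congr (_ *: _); ring.
  rewrite e2 e3 e1 -linearD -linearB.
  suff -> : (a * j1 * j3) *: y2 + (j1 * j2) *: y3 - (j2 * j3) *: y1 = 0 by rewrite linear0.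
  apply: ellinj; rewrite linear0 linearB linearD !(linearZ_LR ell) ey1 ey2 ey3 /w.
  rewrite !scalerA scalerDr !scalerA.
  have -> : a * j1 * j3 * j2 = j2 * j3 * (j1 * a) by ring.
  have -> : j1 * j2 * j3 = j2 * j3 * j1 by ring.
  by rewrite mulrA subrr.
pose sLl := mklin sL_lin.
have linF : linear (fun x : P => c *: nu x - sLl (p x)).
  move=> a x y; rewrite (linearP nu) (linearP p) (linearP sLl) scalerDr scalerA mulrC -scalerA.
  by rewrite scalerBr addrACA opprD.
have hF : forall x, exists n, mklin linF x = iota n.
  move=> x; apply: rho_ker; rewrite mklinE linearB (linearZ_LR rho) rho_nu mklinE (HsL _).1.
  by rewrite subrr.
have [psi Hpsi] := lin_factor iinj hF.
exists psi => k; apply: iinj; rewrite Hpsi mklinE nu_i.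
have -> : p (i k) = 0 by apply/pker; exists k.
by rewrite linear0 subr0 (linearZ_LR iota).
Qed.
End Part1.

Section Part2.
Variable R : comPzRingType.

Lemma gen_ideal_factor (C P : lmodType R) (d : seq R) (g : {linear P -> C})
  (h : 'I_(size d) -> {linear C -> P}) :
  (forall k c, g (h k c) = d`_k *: c) ->
  forall j, in_ideal d j -> exists h' : {linear C -> P}, forall c, g (h' c) = j *: c.
Proof.
move=> Hh j [cf ->].
have lin : linear (fun x : C => \sum_(k < size d) cf k *: h k x).
  move=> a x y; rewrite scaler_sumr -big_split; apply: eq_bigr => k _ /=.
  by rewrite (linearP (h k)) scalerDr !scalerA mulrC.
exists (mklin lin) => x; rewrite mklinE linear_sum scaler_suml; apply: eq_bigr => k _.
by rewrite (linearZ_LR g) Hh scalerA.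
Qed.

Lemma gen_ext (K P N : lmodType R) (d : seq R) (i : {linear K -> P}) (phi : {linear K -> N}) :
  (forall k : 'I_(size d), exists psi : {linear P -> N}, forall x, psi (i x) = d`_k *: phi x) ->
  forall j, in_ideal d j -> exists psi : {linear P -> N}, forall x, psi (i x) = j *: phi x.
Proof.
move=> /choice [Psi HPsi] j [cf ->].
have lin : linear (fun x : P => \sum_(k < size d) cf k *: Psi k x).
  move=> a x y; rewrite scaler_sumr -big_split; apply: eq_bigr => k _ /=.
  by rewrite (linearP (Psi k)) scalerDr !scalerA mulrC.
exists (mklin lin) => x; rewrite mklinE scaler_suml; apply: eq_bigr => k _.
by rewrite HPsi scalerA.
Qed.

Definition wsplit' (C : lmodType R) :=
  (exists (P : lmodType R) (g : {linear P -> C}), projective_mod P /\ forall c, exists x, g x = c) /\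
  exists d : seq R, is_GV d /\ forall k : 'I_(size d), exists P : lmodType R,
    projective_mod P /\ exists (al : {linear C -> P}) (be : {linear P -> C}),
      forall c, be (al c) = d`_k *: c.

Lemma wsplit'_wsplit C : wsplit' C -> w_split C.
Proof.
move=> [[P0 [g0 [P0p g0s]]] [d [Gd H]]].
have HS : submod_pred (fun x : P0 => g0 x = 0).
  split; first exact: linear0.
  split; first by move=> x y hx hy; rewrite linearD hx hy addr0.
  by move=> a x hx; rewrite (linearZ_LR g0) hx scaler0.
have [K [f [finj fS]]] := sub_exists HS.
have hex : forall k : 'I_(size d), exists h : {linear C -> P0}, forall c, g0 (h c) = d`_k *: c.
  move=> k; have [P [Pp [al [be Hab]]]] := H k.
  have [tau Htau] := @Pp _ _ g0 be g0s.
  have lin : linear (fun c => tau (al c)) by move=> a x y; rewrite !linearP.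
  by exists (mklin lin) => c; rewrite mklinE Htau Hab.
have [h Hh] := choice hex.
exists K, P0, f, g0; split; last split => //.
  by split => //; split => // b; exact: fS.
by exists d; split => //; exists h.
Qed.

Lemma free_part (A : lmodType R) : exists (P : lmodType R) (g : {linear P -> A}),
  projective_mod P /\ forall c, exists x, g x = c.
Proof.
have [F [g [Fp gs]]] := free_exists A; by exists F, g.
Qed.

Variables (A B C : lmodType R) (f : {linear A -> B}) (g : {linear B -> C}).
Hypothesis se : short_exact f g.
Hypothesis wC : w_split C.

Lemma rho_ex : exists (PC : lmodType R) (dC : seq R) (lam : {linear PC -> B}),
  projective_mod PC /\ is_GV dC /\
  forall c', in_ideal dC c' -> exists (hc : {linear C -> PC}) (rho : {linear B -> A}),
    (forall b, f (rho b) = c' *: b - lam (hc (g b))) /\ (forall a, rho (f a) = c' *: a).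
Proof.
move: se => [finj [gs gker]].
move: wC => [KC [PC [fC [gC [[_ [gCs _]] [PCp [dC [GdC [hC HhC]]]]]]]]].
have [lam Hlam] := @PCp _ _ g gC gs.
exists PC, dC, lam; split => //; split => // c' hc'.
have [hc Hhc] := gen_ideal_factor HhC hc'.
have linF : linear (fun b => c' *: b - lam (hc (g b))).
  move=> a x y; rewrite (linearP g) (linearP hc) (linearP lam) scalerDr scalerA mulrC -scalerA.
  by rewrite scalerBr addrACA opprD.
have hF : forall b, exists a, mklin linF b = f a.
  move=> b; apply/gker; rewrite mklinE linearB (linearZ_LR g) Hlam Hhc subrr //.
have [rho Hrho] := lin_factor finj hF.
exists hc, rho; split; first by move=> b; rewrite Hrho.
move=> a; apply: finj; rewrite Hrho mklinE (linearZ_LR f).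
have -> : g (f a) = 0 by apply/gker; exists a.
by rewrite (linear0 hc) (linear0 lam) subr0.
Qed.

Lemma AC_B : w_split A -> w_split B.
Proof.
move=> wA; apply: wsplit'_wsplit; split; first exact: free_part.
have [PC [dC [lam [PCp [GdC Hrho]]]]] := rho_ex.
move: wA => [KA [PA [fA [gA [_ [PAp [dA [GdA [hA HhA]]]]]]]]].
exists [seq x * y | x <- dA, y <- dC]; split; first exact: GV_prod.
move=> k; have [a' [c' [ha hc ->]]] := prod_gen k.
have [ha' Hha] := gen_ideal_factor HhA ha.
have [hc' [rho [Hr1 Hr2]]] := Hrho c' hc.
exists (PA * PC)%type; split; first exact: proj_prod.
have linal : linear (fun b => (ha' (rho b), a' *: hc' (g b))).
  move=> s x y; rewrite pairP (linearP rho) (linearP ha') (linearP g) (linearP hc').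
  by rewrite scalerDr !scalerA mulrC.
have linbe : linear (fun v : (PA * PC)%type => f (gA v.1) + lam v.2).
  move=> s [x1 x2] [y1 y2] /=; rewrite (linearP gA) (linearP f) (linearP lam).
  by rewrite scalerDr addrACA.
exists (mklin linal), (mklin linbe) => b; rewrite !mklinE /=.
rewrite Hha (linearZ_LR f) Hr1 (linearZ_LR lam) -scalerDr subrK scalerA.
by [].
Qed.

Lemma BC_A : w_split B -> w_split A.
Proof.
move=> wB; apply: wsplit'_wsplit; split; first exact: free_part.
have [PC [dC [lam [PCp [GdC Hrho]]]]] := rho_ex.
move: wB => [KB [PB [fB [gB [_ [PBp [dB [GdB [hB HhB]]]]]]]]].
exists [seq x * y | x <- dB, y <- dC]; split; first exact: GV_prod.
move=> k; have [b' [c' [hb hc ->]]] := prod_gen k.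
have [hb' Hhb] := gen_ideal_factor HhB hb.
have [hc' [rho [Hr1 Hr2]]] := Hrho c' hc.
exists PB; split => //.
have linal : linear (fun a => hb' (f a)) by move=> s x y; rewrite !linearP.
have linbe : linear (fun x => rho (gB x)) by move=> s x y; rewrite !linearP.
exists (mklin linal), (mklin linbe) => a; rewrite !mklinE.
by rewrite Hhb (linearZ_LR rho) Hr2 scalerA.
Qed.
End Part2.

Theorem corollary2p6 (R : comPzRingType) :
  (forall M : lmodType R, w_split M -> w_projective M) /\
  (forall (A B C : lmodType R) (f : {linear A -> B}) (g : {linear B -> C}),
     short_exact f g -> w_split C -> (w_split A <-> w_split B)).
Proof.
split.
  move=> M [K0 [P0 [f0 [g0 [se [P0p [d [Gd [h Hh]]]]]]]]].
  move=> Q E L q e l Hlm N tf wm K P i p pp phi.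
  exists d; split => //; move=> j hj; apply: (gen_ext _ hj) => k.
  exact: (part1_gen P0p (Hh k) Hlm tf wm pp phi).
move=> A B C f g se wC; split; [exact: (AC_B se wC) | exact: (BC_A se wC)].
Qed.
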